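(* Let $q$ be a prime power and let $\Gamma$ be the set of roots in $\mathbb{F}_{q^3}$ of $X^{q^2}+X^q+X$. Then the polynomial $(X^q-X)\circ X^3=X^{3q}-X^3$ permutes $\Gamma$ (i.e. maps $\Gamma$ bijectively onto $\Gamma$) if and only if $q\equiv 2\pmod 3$. *)

(* Defs.v *)
From mathcomp Require Import all_boot all_order all_algebra all_field.
Set Implicit Arguments. Unset Strict Implicit. Unset Printing Implicit Defensive.
Import GRing.Theory.
Local Open Scope ring_scope.

Definition prime_power (q : nat) : Prop :=
  exists p k : nat, prime p /\ (0 < k)%N /\ q = (p ^ k)%N.

Definition Gamma (F : finFieldType) (q : nat) : {set F} :=
  [set x : F | x ^+ (q ^ 2) + x ^+ q + x == 0].

Definition permutes_set (T : finType) (f : T -> T) (A : {set T}) : Prop :=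
  [/\ {in A, forall x, f x \in A},
      {in A &, injective f} &
      {in A, forall y, exists2 x, x \in A & f x = y}].

(* Main.v *)
Require Import Defs.
From mathcomp Require Import all_boot all_order all_algebra all_field.
From mathcomp Require Import ring zify.
Import GRing.Theory.
Local Open Scope ring_scope.

Section Core.
Variables (F : fieldType) (q : nat).
Hypothesis fD : forall x y : F, (x+y)^+q = x^+q + y^+q.
Hypothesis fN : forall x : F, (-x)^+q = - x^+q.
Hypothesis f3 : forall x : F, ((x^+q)^+q)^+q = x.
Hypothesis cinj : forall a b : F, a^+3 = b^+3 -> a = b.
Hypothesis three : (3%:R : F) != 0.
Hypothesis q0 : (0 < q)%N.

Lemma fB (x y : F) : (x - y)^+q = x^+q - y^+q.
Proof. by rewrite fD fN. Qed.

Lemma fixed0 (x : F) : (x^+q)^+q + x^+q + x = 0 -> x^+q = x -> x = 0.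
Proof.
move=> H E; rewrite !E in H.
have : 3%:R * x = 0 by rewrite -H; ring.
by move/eqP; rewrite mulf_eq0 (negbTE three) => /eqP.
Qed.

Lemma e2_nz (z z1 z2 : F) : z^+q = z1 -> z1^+q = z2 -> z2^+q = z ->
  z2 + z1 + z = 0 -> z * z1 + z1 * z2 + z2 * z = 0 -> z = 0.
Proof.
move=> E0 E1 E2 G H.
have e3E : (z * z1 * z2)^+q = z * z1 * z2.
  by rewrite !exprMn E0 E1 E2; ring.
have zc : z^+3 = z * z1 * z2.
  have -> : z^+3 = z^+2 * (z2 + z1 + z) - z * (z * z1 + z1 * z2 + z2 * z)
            + z * z1 * z2 by ring.
  by rewrite G H; ring.
have z1c : z1^+3 = z^+3.
  by rewrite -E0 -exprM mulnC exprM zc e3E.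
have z1z : z1 = z by apply: cinj z1c.
apply: fixed0; first by rewrite E0 E1 G.
by rewrite E0.
Qed.

Lemma core (x x1 x2 y y1 y2 : F) :
  x^+q = x1 -> x1^+q = x2 -> x2^+q = x ->
  y^+q = y1 -> y1^+q = y2 -> y2^+q = y ->
  x2 + x1 + x = 0 -> y2 + y1 + y = 0 ->
  (x^+3)^+q - x^+3 = (y^+3)^+q - y^+3 -> x = y.
Proof.
move=> X0 X1 X2 Y0 Y1 Y2 Gx Gy H.
have c3 : forall a : F, (a^+3)^+q = (a^+q)^+3 by move=> a; rewrite -!exprM mulnC.
rewrite !c3 X0 Y0 in H.
pose e2 := x * x1 + x1 * x2 + x2 * x.
pose e3 := x * x1 * x2.
pose e2' := y * y1 + y1 * y2 + y2 * y.
pose e3' := y * y1 * y2.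
have e2q : e2^+q = e2 by rewrite /e2 !fD !exprMn X0 X1 X2; ring.
have e2q' : e2'^+q = e2' by rewrite /e2' !fD !exprMn Y0 Y1 Y2; ring.
have e3q : e3^+q = e3 by rewrite /e3 !exprMn X0 X1 X2; ring.
have e3q' : e3'^+q = e3' by rewrite /e3' !exprMn Y0 Y1 Y2; ring.
pose d := e2 * x - e2' * y.
have dE : d = e3 - e3' - (x^+3 - y^+3).
  have -> : d = e3 - e3' - (x^+3 - y^+3) + x^+2 * (x2 + x1 + x)
              - y^+2 * (y2 + y1 + y) by rewrite /d /e2 /e2' /e3 /e3'; ring.
  by rewrite Gx Gy; ring.
have dq : d^+q = d.
  rewrite dE !fB e3q e3q' c3 c3 X0 Y0.
  have -> : x1^+3 - y1^+3 = x^+3 - y^+3.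
    have -> : x1^+3 - y1^+3 = x^+3 - y^+3 + ((x1^+3 - x^+3) - (y1^+3 - y^+3)) by ring.
    by rewrite H subrr addr0.
  by [].
have dq1 : d^+q = e2 * x1 - e2' * y1 by rewrite /d fB !exprMn e2q e2q' X0 Y0.
have dq2 : d = e2 * x2 - e2' * y2.
  by rewrite -{1}dq -{1}dq dq1 fB !exprMn e2q e2q' X1 Y1.
have d0 : d = 0.
  have : 3%:R * d = 0.
    have -> : 3%:R * d = d + d^+q + d by rewrite dq; ring.
    rewrite {1}dq2 dq1 /d.
    have -> : e2 * x2 - e2' * y2 + (e2 * x1 - e2' * y1) + (e2 * x - e2' * y)
       = e2 * (x2 + x1 + x) - e2' * (y2 + y1 + y) by ring.
    by rewrite Gx Gy; ring.
  by move/eqP; rewrite mulf_eq0 (negbTE three) => /eqP.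
have Ex : e2 * x = e2' * y by apply/eqP; rewrite -subr_eq0 -/d d0.
have Ax : e2 = 0 -> x = 0 by move=> h; exact: (@e2_nz x x1 x2 X0 X1 X2 Gx h).
have Ay : e2' = 0 -> y = 0 by move=> h; exact: (@e2_nz y y1 y2 Y0 Y1 Y2 Gy h).
have [x0|xn0] := eqVneq x 0.
  have x10 : x1 = 0 by rewrite -X0 x0 expr0n eqn0Ngt q0.
  have x20 : x2 = 0 by rewrite -X1 x10 expr0n eqn0Ngt q0.
  have e20 : e2 = 0 by rewrite /e2 x0 x10 x20; ring.
  move: Ex; rewrite e20 mul0r x0 => /esym /eqP; rewrite mulf_eq0 => /orP[/eqP/Ay|/eqP] ->//.
have e2n : e2 != 0 by apply/eqP => /Ax; apply/eqP.
have [y0|yn0] := eqVneq y 0.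
  by move: Ex; rewrite y0 mulr0 => /eqP; rewrite mulf_eq0 (negbTE e2n) (negbTE xn0).
have e2n' : e2' != 0 by apply/eqP => /Ay; apply/eqP.
pose l := e2 / e2'.
have yE : y = l * x by rewrite /l mulrAC Ex mulrC mulKf.
have lq : l^+q = l by rewrite /l exprMn exprVn e2q e2q'.
have y1E : y1 = l * x1 by rewrite -Y0 yE exprMn lq X0.
rewrite y1E yE ![(l * _)^+3]exprMn in H.
have [l1|l1] := eqVneq (l^+3) 1.
  by rewrite yE (cinj l 1) ?mul1r // l1 expr1n.
have : (1 - l^+3) * (x1^+3 - x^+3) = 0.
  by rewrite mulrBl mul1r {1}H; ring.
move/eqP; rewrite mulf_eq0 subr_eq0 eq_sym (negbTE l1) /= subr_eq0 => /eqP/cinj x1x.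
exfalso; move/eqP: xn0; apply; apply: fixed0; first by rewrite X0 X1 Gx.
by rewrite X0.
Qed.
End Core.

Lemma nonfix (F : finFieldType) (m : nat) :
  (1 < m)%N -> (m < #|F|)%N -> exists z : F, z ^+ m != z.
Proof.
move=> m1 mF.
pose P : {poly F} := 'X^m - 'X.
have sP : size P = m.+1.
  by rewrite /P size_polyDl size_polyXn // size_polyN size_polyX.
have Pn0 : P != 0 by rewrite -size_poly_eq0 sP.
have [z Hz|H] := pickP (fun z : F => z ^+ m != z); first by exists z.
exfalso.
have : all (root P) (enum F).
  apply/allP => z _; rewrite rootE /P !hornerE subr_eq0.
  by move: (H z) => /= /negbFE.
move/(max_poly_roots Pn0)/(_ (enum_uniq _)).
by rewrite sP -cardE ltnS leqNgt mF.
Qed.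

Lemma perm_of_inj (T : finType) (f : T -> T) (A : {set T}) :
  {in A, forall x, f x \in A} -> {in A &, injective f} -> permutes_set f A.
Proof.
move=> fA inj; split=> // y yA.
have sub : f @: A \subset A by apply/subsetP => _ /imsetP[x xA ->]; exact: fA.
have /eqP E : f @: A == A by rewrite eqEcard sub (card_in_imset inj) leqnn.
have : y \in f @: A by rewrite E.
by case/imsetP => x xA ->; exists x.
Qed.

Theorem theorem1p7 (q : nat) (F : finFieldType) :
  prime_power q -> #|F| = (q ^ 3)%N ->
  (permutes_set (fun x : F => x ^+ (3 * q) - x ^+ 3) (Gamma F q)
   <-> (q %% 3 = 2)%N).
Proof.
move=> [p [k [pp [k0 qE]]]] cardF.
have pch : p \in [char F].
  by apply: (@card_finPcharP _ p (k * 3)) => //; rewrite cardF qE -expnM.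
have natq : [char F].-nat q by rewrite qE pnatX (pnatE _ pp) pch.
have q1 : (1 < q)%N.
  rewrite qE; apply: leq_trans (prime_gt1 pp) _.
  by rewrite -{1}(expn1 p) leq_pexp2l // prime_gt0.
have q0 : (0 < q)%N by apply: ltnW.
have fD : forall x y : F, (x + y)^+q = x^+q + y^+q by move=> x y; exact: exprDn_pchar.
have fN : forall x : F, (- x)^+q = - x^+q by move=> x; exact: exprNn_pchar.
have fB : forall x y : F, (x - y)^+q = x^+q - y^+q by move=> x y; rewrite fD fN.
have f3 : forall x : F, ((x^+q)^+q)^+q = x.
  move=> x; rewrite -exprM -exprM.
  have -> : (q * (q * q) = #|F|)%N by rewrite cardF !expnS expn0 muln1.
  exact: expf_card.
have GE : forall x : F, (x \in Gamma F q) = ((x^+q)^+q + x^+q + x == 0).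
  by move=> x; rewrite inE -exprM expnS expn1.
have Lin : forall y : F, y^+q - y \in Gamma F q.
  by move=> y; rewrite GE !fB f3; apply/eqP; ring.
have fin : forall x : F, x ^+ (3 * q) - x ^+ 3 \in Gamma F q.
  by move=> x; rewrite exprM; apply: Lin.
have N8 : (8 <= #|F|)%N.
  by rewrite cardF; have : (2^3 <= q^3)%N by rewrite leq_exp2r.
have qN : (q < #|F|)%N by rewrite cardF -{1}(expn1 q) ltn_exp2l.
have z0 : (0:F)^+q = 0 by rewrite expr0n gtn_eqF.
split.
- case=> _ inj _.
  have : (q %% 3 < 3)%N by rewrite ltn_mod.
  case Hm: (q %% 3)%N => [|[|[|m]]] // _.
  +
    have p3 : p = 3%N.
      have : (3 %| q)%N by rewrite /dvdn Hm.
      rewrite qE Euclid_dvdX // k0 andbT dvdn_prime2 //.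
      by move/eqP.
    have three0 : (3%:R : F) = 0 by rewrite -p3; exact: pcharf0.
    have G1 : (1:F) \in Gamma F q.
      by rewrite GE !expr1n; apply/eqP; rewrite -three0; ring.
    have G0 : (0:F) \in Gamma F q by rewrite GE !z0 !addr0.
    have : (1:F) = 0.
      by apply: inj => //; rewrite !expr1n subrr exprM [0^+3]expr0n /= z0 subrr.
    by move/eqP; rewrite oner_eq0.
  +
    have NE : (#|F| %% 3 = 1)%N by rewrite cardF -modnXm Hm.
    set N := #|F| in NE N8 qN.
    set n := (N %/ 3)%N.
    have Nn : N = (3 * n).+1 by rewrite {1}(divn_eq N 3) NE addn1 mulnC.
    have n1 : (1 < n.+1)%N by lia.
    have n2 : (n.+1 < N)%N by lia.
    have [z Hz] := @nonfix F _ n1 n2.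
    have zn0 : z != 0.
      by apply: contraNneq Hz => ->; rewrite expr0n.
    pose w := z ^+ n.
    have w3 : w ^+ 3 = 1.
      have : z ^+ N = z by exact: expf_card.
      rewrite Nn exprS => /eqP; rewrite -{3}(mulr1 z) (inj_eq (mulfI zn0)).
      by rewrite /w -exprM mulnC => /eqP.
    have wn1 : w != 1.
      by apply: contraNneq Hz => w1; rewrite exprS -/w w1 mulr1.
    have wq : w ^+ q = w.
      by rewrite (divn_eq q 3) Hm addn1 exprS mulnC exprM w3 expr1n mulr1.
    have [z' Hz'] := @nonfix F _ q1 qN.
    pose x := z'^+q - z'.
    have xn0 : x != 0 by rewrite subr_eq0.
    have xG : x \in Gamma F q by apply: Lin.
    have wxG : w * x \in Gamma F q.
      move: xG; rewrite !GE !exprMn !wq => /eqP H.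
      by rewrite -!mulrDr H mulr0.
    have : w * x = x.
      apply: inj => //.
      by rewrite !exprMn exprM w3 expr1n !mul1r.
    move/eqP; rewrite -{2}(mul1r x) (inj_eq (mulIf xn0)).
    by rewrite (negbTE wn1).
- move=> Hq.
  have three : (3%:R : F) != 0.
    rewrite -(dvdn_pcharf pch); apply/negP => /=.
    rewrite dvdn_prime2 // => /eqP p3.
    move: Hq; rewrite qE p3; case: (k) k0 => // k' _.
    by rewrite expnS modnMr.
  have NE : (#|F| %% 3 = 2)%N by rewrite cardF -modnXm Hq.
  have unit3 : forall w : F, w ^+ 3 = 1 -> w = 1.
    move=> w w3.
    have wn0 : w != 0 by apply: contra_eq_neq w3 => ->; rewrite expr0n /= eq_sym oner_neq0.
    have : w ^+ #|F| = w by exact: expf_card.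
    rewrite (divn_eq #|F| 3) NE exprD mulnC exprM w3 expr1n mul1r expr2.
    by move/eqP; rewrite -{3}(mulr1 w) (inj_eq (mulfI wn0)) => /eqP.
  have cinj : forall a b : F, a ^+ 3 = b ^+ 3 -> a = b.
    move=> a b H.
    have [b0|bn0] := eqVneq b 0.
      by move: H; rewrite b0 expr0n /= => /eqP; rewrite expf_eq0 /= => /eqP.
    have : (a / b) ^+ 3 = 1 by rewrite expr_div_n H divff // expf_neq0.
    by move/unit3 => h; rewrite -(divfK bn0 a) h mul1r.
  apply: perm_of_inj => // x y xG yG /= H.
  apply: (@core F q fD fN cinj three q0 x _ _ y _ _ erefl erefl (f3 x) erefl erefl (f3 y)).
  + by apply/eqP; rewrite -GE.
  + by apply/eqP; rewrite -GE.
  + by rewrite -!exprM.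
Qed.
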